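(* Let $f\in\mathfrak{D}_j$ be homogeneous of degree $j$, let $j-2\ge k_1\ge\cdots\ge k_s\ge 1$ be integers, $h_t\in\mathfrak{D}_{k_t}$ homogeneous for $1\le t\le s$, and $F=f+\sum_{t=1}^s h_tZ_t\in\mathfrak{E}$. For each $t$, define $$B_t=\frac{R\circ\langle f,h_1,\ldots,h_t\rangle+(\operatorname{Ann}_R\langle f,h_1,\ldots,h_{t-1}\rangle)\circ(h_tZ_t+\cdots+h_sZ_s)}{R\circ\langle f,h_1,\ldots,h_{t-1}\rangle+(\operatorname{Ann}_R\langle f,h_1,\ldots,h_t\rangle)\circ(h_{t+1}Z_{t+1}+\cdots+h_sZ_s)}.$$ Then $B_t=0$ if and only if $h_t\in R\circ\langle f,h_1,\ldots,h_{t-1}\rangle$.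
   Context: Let $\mathsf{k}$ be a field, $R=\mathsf{k}\{x_1,\ldots,x_r\}$, $\mathfrak{D}=\mathsf{k}_{DP}[X_1,\ldots,X_r]\subset\mathfrak{E}=\mathsf{k}_{DP}[X_1,\ldots,X_r,Z_1,\ldots,Z_s]$ divided power algebras, with $R$ acting by contraction ($x^{\alpha}\circ X^{[\beta]}=X^{[\beta-\alpha]}$ if $\beta\ge\alpha$ componentwise, $0$ otherwise; the $Z_i$ are untouched by $R$). $R\circ\langle g_1,\ldots\rangle$ is the span of all partials $\varphi\circ g_i$, $\operatorname{Ann}_R\langle g_1,\ldots\rangle$ is the set of elements of $R$ annihilating every $g_i$, and $V\circ g=\{v\circ g:v\in V\}$; sums in $B_t$ are sums of subspaces of $\mathfrak{E}$. *)

(* Defs.v *)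
From HB Require Import structures.
From mathcomp Require Import all_boot all_order all_algebra.
From mathcomp Require Import mpoly.
Set Implicit Arguments. Unset Strict Implicit. Unset Printing Implicit Defensive.
Import GRing.Theory.
Local Open Scope ring_scope.

(* Representation conventions.
   * Divided power algebras as k-vector spaces:  an element of
     k_DP[Y_1..Y_n] is  \sum_m c_m Y^[m]  (finitely many m); we store it as
     the element  \sum_m c_m 'X_[m]  of {mpoly K[n]}, i.e. the mpoly monomial
     'X_[m] stands for the divided monomial Y^[m].  Only the k-vector space
     structure of {mpoly K[n]} is used; the divided power product is
     defined separately below ([dpmul]).
   * D := k_DP[X_1..X_r]  is {mpoly K[r]},
     E := k_DP[X_1..X_r,Z_1..Z_s] is {mpoly K[r + s]}, variable i<r of E is
     X_(i+1), variable r+t is Z_(t+1).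
   * R = k{x_1..x_r} is represented by {mpoly K[r]}: the contraction action of a
     series on a (finite) divided power polynomial only depends on finitely
     many terms. *)

Section DP.
Variables (K : fieldType) (r s : nat).

Definition DPD := {mpoly K[r]}.
Definition DPE := {mpoly K[r + s]}.
Definition Ring := {mpoly K[r]}.

Definition mext (a : 'X_{1..r}) : 'X_{1..r + s} :=
  [multinom (match split i with inl i' => a i' | inr _ => 0%N end) | i < r + s].

Definition incl (g : DPD) : DPE :=
  \sum_(m <- msupp g) g@_m *: 'X_[mext m].

Definition Zvar (t : 'I_s) : DPE := 'X_(rshift r t).

(* divided power product:  Y^[a] Y^[b] = (prod_i C(a_i+b_i, a_i)) Y^[a+b] *)
Definition dpmul (p q : DPE) : DPE :=
  \sum_(a <- msupp p) \sum_(b <- msupp q)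
     (p@_a * q@_b * (\prod_(i < r + s) 'C(a i + b i, a i))%:R) *: 'X_[(a + b)%MM].

Definition mnm_lec (a b : 'X_{1..r + s}) : bool := [forall i, a i <= b i]%N.

Definition contr (phi : Ring) (g : DPE) : DPE :=
  \sum_(a <- msupp phi) \sum_(b <- msupp g)
     (if mnm_lec (mext a) b then (phi@_a * g@_b) *: 'X_[(b - mext a)%MM] else 0).

Definition subspace := DPE -> Prop.

Definition Rspan (gs : seq DPE) : subspace :=
  fun g => exists phis : seq Ring, g = \sum_(pg <- zip phis gs) contr pg.1 pg.2.

Definition Ann (gs : seq DPE) : Ring -> Prop :=
  fun phi => forall g, g \in gs -> contr phi g = 0.

Definition act_set (V : Ring -> Prop) (g : DPE) : subspace :=
  fun x => exists2 v, V v & x = contr v g.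

Definition ssum (A B : subspace) : subspace :=
  fun x => exists a b, [/\ A a, B b & x = a + b].

Definition ssub (A B : subspace) : Prop := forall x, A x -> B x.

(* a quotient A / B of subspaces is zero iff A \subset B
   (for B \subset A this is A = B; in general A/(A cap B) = 0) *)
Definition quot_zero (A B : subspace) : Prop := ssub A B.

(* Data of the statement: f in D, h : 'I_s -> D (0-based indices: h t is h_(t+1)) *)
Variables (f : DPD) (h : 'I_s -> DPD).

(* generators  f, h_1, ..., h_p  (1-based), i.e. f and the h i with val i < p *)
Definition gens (p : nat) : seq DPE :=
  incl f :: [seq incl (h i) | i <- enum 'I_s & (val i < p)%N].

(* tail  h_(p+1) Z_(p+1) + ... + h_s Z_s  (1-based), i.e. over val i >= p *)
Definition tailsum (p : nat) : DPE :=
  \sum_(i : 'I_s | (p <= val i)%N) dpmul (incl (h i)) (Zvar i).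

(* numerator and denominator of B_t, for t : 'I_s standing for index t+1 *)
Definition Bnum (t : 'I_s) : subspace :=
  ssum (Rspan (gens t.+1)) (act_set (Ann (gens t)) (tailsum t)).
Definition Bden (t : 'I_s) : subspace :=
  ssum (Rspan (gens t)) (act_set (Ann (gens t.+1)) (tailsum t.+1)).

Definition B_zero (t : 'I_s) : Prop := quot_zero (Bnum t) (Bden t).

End DP.

(* Main.v *)
Require Import Defs.
From HB Require Import structures.
From mathcomp Require Import all_boot all_order all_algebra.
From mathcomp Require Import mpoly ssrcomplements.
From mathcomp Require Import zify.
Set Implicit Arguments. Unset Strict Implicit. Unset Printing Implicit Defensive.
Import GRing.Theory.
Local Open Scope ring_scope.

Section Lf.
Variables (K : fieldType) (n : nat).
Implicit Types (p q : {mpoly K[n]}).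

Definition Lf (G : 'X_{1..n} -> K) p := \sum_(m <- msupp p) p@_m * G m.

Lemma LfE G p i : (msize p <= i)%N ->
  Lf G p = \sum_(m : 'X_{1..n < i}) p@_(val m) * G (val m).
Proof.
move=> le_pi; set I : subFinType _ := 'X_{1..n < i}.
rewrite /Lf (big_mksub I) ?msupp_uniq //=; first last.
  by move=> x /msize_mdeg_lt /leq_trans; apply.
by rewrite big_rmcond //= => j /memN_msupp_eq0 ->; rewrite mul0r.
Qed.

Lemma LfD G p q : Lf G (p + q) = Lf G p + Lf G q.
Proof.
set i := maxn (msize p) (maxn (msize q) (msize (p + q))).
have h1 : (msize p <= i)%N by rewrite /i; lia.
have h2 : (msize q <= i)%N by rewrite /i; lia.
have h3 : (msize (p + q) <= i)%N by rewrite /i; lia.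
rewrite !(LfE G h1, LfE G h2, LfE G h3).
by rewrite -big_split; apply: eq_bigr => m _; rewrite mcoeffD mulrDl.
Qed.

Lemma LfZ G c p : Lf G (c *: p) = c * Lf G p.
Proof.
set i := maxn (msize p) (msize (c *: p)).
have h1 : (msize p <= i)%N by rewrite /i; lia.
have h2 : (msize (c *: p) <= i)%N by rewrite /i; lia.
rewrite (LfE G h1) (LfE G h2) mulr_sumr.
by apply: eq_bigr => m _; rewrite mcoeffZ mulrA.
Qed.

Lemma Lf0 G : Lf G 0 = 0.
Proof. by rewrite /Lf msupp0 big_nil. Qed.

Lemma Lf_sum G (I : Type) (rr : seq I) (P : pred I) (F : I -> {mpoly K[n]}) :
  Lf G (\sum_(x <- rr | P x) F x) = \sum_(x <- rr | P x) Lf G (F x).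
Proof.
elim: rr => [|x rr IH]; first by rewrite !big_nil Lf0.
by rewrite !big_cons; case: (P x) => //; rewrite LfD IH.
Qed.

Lemma LfX G m : Lf G 'X_[m] = G m.
Proof. by rewrite /Lf msuppX big_seq1 mcoeffX eqxx mul1r. Qed.

Lemma Lf_ext G1 G2 p : (forall m, G1 m = G2 m) -> Lf G1 p = Lf G2 p.
Proof. by move=> e; apply: eq_bigr => m _; rewrite e. Qed.

Lemma LfXM G a q : Lf G ('X_[a] * q) = Lf (fun c => G (a + c)%MM) q.
Proof.
rewrite {1}(mpolyE q) mulr_sumr Lf_sum [in RHS]/Lf; apply: eq_bigr => c _.
by rewrite -scalerAr -mpolyXD LfZ LfX.
Qed.

Lemma LfM G p q : Lf G (p * q) = Lf (fun a => Lf (fun c => G (a + c)%MM) q) p.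
Proof.
rewrite {1}(mpolyE p) mulr_suml Lf_sum [in RHS]/Lf; apply: eq_bigr => a _.
by rewrite -scalerAl LfZ LfXM.
Qed.

End Lf.

Section Contr.
Variables (K : fieldType) (r s : nat).
Local Notation E := (DPE K r s).
Local Notation RR := (Ring K r).

Lemma split_rs (t : 'I_s) : split (rshift r t) = inr t.
Proof. exact: (unsplitK (inr _ t)). Qed.

Lemma mext_rshift (a : 'X_{1..r}) (t : 'I_s) : mext s a (rshift r t) = 0%N.
Proof. by rewrite /mext mnmE split_rs. Qed.

Lemma mextD (a c : 'X_{1..r}) : mext s (a + c)%MM = (mext s a + mext s c)%MM.
Proof.
apply/mnmP => i; rewrite mnmDE /mext !mnmE.
by case: (split i) => // i'; rewrite mnmDE.
Qed.

Lemma mext0 : mext s (0%MM : 'X_{1..r}) = 0%MM.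
Proof. by apply/mnmP => i; rewrite /mext mnmE mnm0E; case: (split i) => // i'; rewrite mnm0E. Qed.

Lemma mcoeff_expand (g : E) m : g@_m = \sum_(b <- msupp g) g@_b * (b == m)%:R.
Proof.
rewrite {1}(mpolyE g) raddf_sum; apply: eq_bigr => b _ /=.
by rewrite mcoeffZ mcoeffX.
Qed.

Lemma contrE (phi : RR) (g : E) m :
  (contr phi g)@_m = Lf (fun a => g@_(m + mext s a)%MM) phi.
Proof.
rewrite /contr raddf_sum; apply: eq_bigr => a _.
rewrite raddf_sum (mcoeff_expand g (m + mext s a)%MM) mulr_sumr.
apply: eq_bigr => b _.
case: ifP => hle /=.
  rewrite (mcoeffZ (R:=K) (n:=r+s)) mcoeffX mulrA; congr (_ * _%:R).
  have /forallP hle' := hle.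
congr nat_of_bool.
  apply/idP/idP => /eqP H; apply/eqP; apply/mnmP => i.
    by rewrite -H !(mnmDE, mnmBE) subnK.
  by rewrite H !(mnmDE, mnmBE) addnK.
rewrite mcoeff0; case: eqP => [eb|_]; last by rewrite !mulr0.
exfalso; move/negbT: hle => /negP; apply; apply/forallP => i.
by rewrite eb mnmDE leq_addl.
Qed.

Lemma contrD (phi : RR) (g1 g2 : E) : contr phi (g1 + g2) = contr phi g1 + contr phi g2.
Proof.
apply/mpolyP => m; rewrite mcoeffD !contrE /Lf -big_split; apply: eq_bigr => a _.
by rewrite mcoeffD mulrDr.
Qed.

Lemma contr0g (phi : RR) : contr phi (0 : E) = 0.
Proof.
apply/mpolyP => m; rewrite contrE mcoeff0 /Lf big1 // => a _.
by rewrite mcoeff0 mulr0.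
Qed.

Lemma contr_sum (phi : RR) (I : Type) (rr : seq I) (P : pred I) (F : I -> E) :
  contr phi (\sum_(x <- rr | P x) F x) = \sum_(x <- rr | P x) contr phi (F x).
Proof.
elim: rr => [|x rr IH]; first by rewrite !big_nil contr0g.
by rewrite !big_cons; case: (P x) => //; rewrite contrD IH.
Qed.

Lemma contrDl (phi psi : RR) (g : E) : contr (phi + psi) g = contr phi g + contr psi g.
Proof. by apply/mpolyP => m; rewrite mcoeffD !contrE LfD. Qed.

Lemma contr0 (g : E) : contr 0 g = 0.
Proof. by apply/mpolyP => m; rewrite contrE Lf0 mcoeff0. Qed.

Lemma contr1 (g : E) : contr 1 g = g.
Proof.
apply/mpolyP => m; rewrite contrE -mpolyX0 LfX mext0.
by rewrite addm0.
Qed.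

Lemma contrM (phi psi : RR) (g : E) : contr phi (contr psi g) = contr (phi * psi) g.
Proof.
apply/mpolyP => m; rewrite !contrE LfM; apply: Lf_ext => a.
by rewrite contrE; apply: Lf_ext => c; rewrite mextD addmA.
Qed.

End Contr.

Section Z.
Variables (K : fieldType) (r s : nat).
Local Notation E := (DPE K r s).
Local Notation RR := (Ring K r).

Definition Zfree (p : E) := forall (m : 'X_{1..r+s}) (i : 'I_s), m (rshift r i) != 0%N -> p@_m = 0.
Definition Zfull (p : E) := forall m : 'X_{1..r+s}, (forall i : 'I_s, m (rshift r i) = 0%N) -> p@_m = 0.

Lemma Zfree_contr (phi : RR) (g : E) : Zfree g -> Zfree (contr phi g).
Proof.
move=> Hg m i Hi; rewrite contrE /Lf big1 // => a _.
by rewrite (Hg _ i) ?mulr0 // mnmDE mext_rshift addn0.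
Qed.

Lemma Zfull_contr (phi : RR) (g : E) : Zfull g -> Zfull (contr phi g).
Proof.
move=> Hg m Hi; rewrite contrE /Lf big1 // => a _.
by rewrite Hg ?mulr0 // => i; rewrite mnmDE mext_rshift addn0.
Qed.

Lemma Zfree0 : Zfree 0. Proof. by move=> m i _; rewrite mcoeff0. Qed.
Lemma Zfull0 : Zfull 0. Proof. by move=> m _; rewrite mcoeff0. Qed.
Lemma ZfreeD p q : Zfree p -> Zfree q -> Zfree (p + q).
Proof. by move=> Hp Hq m i Hi; rewrite mcoeffD (Hp _ i) // (Hq _ i) // addr0. Qed.
Lemma ZfullD p q : Zfull p -> Zfull q -> Zfull (p + q).
Proof. by move=> Hp Hq m Hi; rewrite mcoeffD Hp // Hq // addr0. Qed.
Lemma ZfreeN p : Zfree p -> Zfree (- p).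
Proof. by move=> Hp m i Hi; rewrite mcoeffN (Hp _ i) // oppr0. Qed.

Lemma Zfree_sum (I : Type) (rr : seq I) (P : pred I) (F : I -> E) :
  (forall x, P x -> Zfree (F x)) -> Zfree (\sum_(x <- rr | P x) F x).
Proof.
move=> H; elim: rr => [|x rr IH]; first by rewrite big_nil; exact: Zfree0.
by rewrite big_cons; case: ifP => Px //; apply: ZfreeD => //; apply: H.
Qed.

Lemma Zfull_sum (I : Type) (rr : seq I) (P : pred I) (F : I -> E) :
  (forall x, P x -> Zfull (F x)) -> Zfull (\sum_(x <- rr | P x) F x).
Proof.
move=> H; elim: rr => [|x rr IH]; first by rewrite big_nil; exact: Zfull0.
by rewrite big_cons; case: ifP => Px //; apply: ZfullD => //; apply: H.
Qed.

Lemma Zfree_incl (q : DPD K r) : Zfree (incl s q).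
Proof.
move=> m i Hi; rewrite /incl raddf_sum big1 // => a _ /=.
rewrite (mcoeffZ (R:=K) (n:=r+s)) mcoeffX.
case: eqP => [e|_]; last by rewrite mulr0.
by move: Hi; rewrite -e mext_rshift.
Qed.

Lemma Zfree_full0 p : Zfree p -> Zfull p -> p = 0.
Proof.
move=> Hp Hq; apply/mpolyP => m; rewrite mcoeff0.
case: (boolP [forall i : 'I_s, m (rshift r i) == 0%N]) => [/forallP H|].
  by apply: Hq => i; apply/eqP.
by rewrite negb_forall => /existsP [i Hi]; apply: (Hp _ i).
Qed.

Lemma dpmulZ (p : E) (t : 'I_s) n : Zfree p ->
  (dpmul p (Zvar K r t))@_n =
  if (0 < n (rshift r t))%N then p@_(n - U_(rshift r t))%MM else 0.
Proof.
move=> Hp; rewrite /dpmul /Zvar raddf_sum.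
under eq_bigr => a _ do rewrite msuppX big_seq1 /= (mcoeffZ (R:=K) (n:=r+s)) mcoeffX mcoeffX eqxx mulr1.
have bin1 : forall a, p@_a != 0 ->
    (\prod_(i < r + s) 'C(a i + U_(rshift r t)%MM i, a i))%N = 1%N.
  move=> a Ha; apply: big1 => i _; rewrite mnm1E.
  case: eqP => [<-|_]; last by rewrite addn0 binn.
  have -> : a (rshift r t) = 0%N.
    by apply/eqP; apply: contraNT Ha => Hne; apply/eqP; apply: (Hp _ t).
  by rewrite bin0.
case: ifP => Hn.
  rewrite (mcoeff_expand p); apply: eq_big_seq => a Ha.
  rewrite bin1 -?mcoeff_msupp // mulr1; congr (_ * (nat_of_bool _)%:R).
  apply/idP/idP => /eqP H; apply/eqP; apply/mnmP => i.
    by rewrite -H !(mnmDE, mnmBE) addnK.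
  rewrite H !(mnmDE, mnmBE) subnK // mnm1E.
  by case: eqP => [<-|]. 
apply: big1 => a _; case: eqP => [e|_]; last by rewrite mulr0.
by move: Hn; rewrite -e mnmDE mnm1E eqxx addn1.
Qed.

Lemma Zfull_dpmul (q : DPD K r) (t : 'I_s) : Zfull (dpmul (incl s q) (Zvar K r t)).
Proof. by move=> m Hm; rewrite dpmulZ; [rewrite (Hm t) | exact: Zfree_incl]. Qed.

Lemma contr_dpmul0 (v : RR) (q : DPD K r) (t : 'I_s) :
  contr v (incl s q) = 0 -> contr v (dpmul (incl s q) (Zvar K r t)) = 0.
Proof.
move=> H0; apply/mpolyP => m; rewrite contrE mcoeff0.
rewrite (Lf_ext (G2 := fun a => if (0 < m (rshift r t))%N
   then (incl s q)@_((m - U_(rshift r t)) + mext s a)%MM else 0)); last first.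
  move=> a; rewrite dpmulZ; last exact: Zfree_incl.
  rewrite mnmDE mext_rshift addn0.
  case: ifP => // Hm; congr mcoeff; apply/mnmP => i.
  rewrite !(mnmDE, mnmBE) mnm1E; case: eqP => [<-|_].
    by rewrite mext_rshift !addn0.
  by rewrite !subn0.
case: (0 < m (rshift r t))%N; last by rewrite /Lf big1 // => a _; rewrite mulr0.
by rewrite -contrE H0 mcoeff0.
Qed.

End Z.

Section Main.
Variables (K : fieldType) (r s : nat).
Local Notation E := (DPE K r s).
Local Notation RR := (Ring K r).

Lemma zip_sum (phis : seq RR) (gs : seq E) :
  \sum_(pg <- zip phis gs) contr pg.1 pg.2 =
  \sum_(i < size gs) contr (nth 0 phis i) (nth 0 gs i).
Proof.
elim: gs phis => [|g gs IH] [|phi phis] /=.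
- by rewrite big_nil big_ord0.
- by rewrite big_nil big_ord0.
- by rewrite big_nil big1 // => i _; rewrite nth_nil contr0.
by rewrite big_cons big_ord_recl /= IH.
Qed.

Lemma RspanP (gs : seq E) x : Rspan gs x <->
  exists phi : nat -> RR, x = \sum_(i < size gs) contr (phi i) (nth 0 gs i).
Proof.
split => [[phis ->]|[phi ->]].
  by exists (fun i => nth 0 phis i); rewrite zip_sum.
exists (mkseq phi (size gs)); rewrite zip_sum; apply: eq_bigr => i _.
by rewrite nth_mkseq.
Qed.

Lemma filt_val (p : nat) : (p <= s)%N ->
  map val [seq i <- enum 'I_s | (val i < p)%N] = iota 0 p.
Proof.
move=> hp.
have mf : forall (T U : Type) (g : T -> U) (P : pred U) (l : seq T),
    map g [seq x <- l | P (g x)] = [seq y <- map g l | P y].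
  by move=> T U g P; elim=> //= x l IH; case: (P (g x)) => //=; rewrite IH.
rewrite (mf _ _ val (fun x => (x < p)%N)) val_enum_ord.
rewrite -(subnKC hp) iotaD filter_cat add0n.
rewrite (eq_in_filter (a2 := predT)); last by move=> x; rewrite mem_iota.
rewrite filter_predT (eq_in_filter (a2 := pred0)); last first.
  by move=> x; rewrite mem_iota /= => /andP [hx _]; rewrite ltnNge hx.
by rewrite filter_pred0 cats0.
Qed.

Variables (f : DPD K r) (h : 'I_s -> DPD K r).

Lemma gens_rcons (t : 'I_s) :
  gens f h t.+1 = rcons (gens f h t) (incl s (h t)).
Proof.
have E : [seq i <- enum 'I_s | (val i < t.+1)%N] =
          rcons [seq i <- enum 'I_s | (val i < t)%N] t.
  apply: (inj_map val_inj).
  rewrite map_rcons (filt_val (ltn_ord t)) (filt_val (ltnW (ltn_ord t))).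
  by rewrite -addn1 iotaD add0n cats1.
rewrite /gens rcons_cons E map_rcons.
reflexivity.
Qed.

Lemma gens_Zfree p g : g \in gens f h p -> Zfree g.
Proof.
rewrite in_cons => /orP [/eqP ->|]; first exact: Zfree_incl.
by case/mapP => i _ ->; exact: Zfree_incl.
Qed.

Lemma tailsum_split (t : 'I_s) :
  tailsum h t = dpmul (incl s (h t)) (Zvar K r t) + tailsum h t.+1.
Proof.
rewrite /tailsum (bigD1 t) //=; congr (_ + _); apply: eq_bigl => i /=.
by rewrite ltn_neqAle andbC eq_sym.
Qed.

End Main.

Theorem corollary1p44 (K : fieldType) (r s j : nat)
  (f : {mpoly K[r]}) (k : 'I_s -> nat) (h : 'I_s -> {mpoly K[r]}) :
  f \is j.-homog ->
  (forall t, h t \is (k t).-homog) ->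
  (forall t : 'I_s, val t = 0%N -> (k t <= j - 2)%N) ->
  (forall t1 t2 : 'I_s, (val t1 <= val t2)%N -> (k t2 <= k t1)%N) ->
  (forall t, (1 <= k t)%N) ->
  forall t : 'I_s,
    B_zero f h t <-> Rspan (gens f h t) (incl s (h t)).
Proof.
move=> _ _ _ _ _ t.
set gs := gens f h t.
have Hg : gens f h t.+1 = rcons gs (incl s (h t)) by exact: gens_rcons.
split.
  move=> HB.
  have Hx : Bnum f h t (incl s (h t)).
    exists (incl s (h t)), 0; split; last by rewrite addr0.
    - apply/RspanP; rewrite Hg size_rcons.
      exists (fun i => if i == size gs then 1 else 0).
      rewrite big_ord_recr nth_rcons ltnn !eqxx contr1 big1.
        symmetry; apply: add0r.
      by move=> i _; rewrite (ltn_eqF (ltn_ord i)) contr0.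
    - by exists 0; [move=> g _; exact: contr0 | rewrite contr0].
  have [a [b [Ha [v Hv Eb] Ex]]] := HB _ Hx.
  have Za : Zfree a.
    case/RspanP: Ha => phi ->; apply: Zfree_sum => i _.
    by apply: Zfree_contr; apply: (@gens_Zfree _ _ _ f h t); apply: mem_nth.
  have Zb : Zfull b.
    rewrite Eb; apply: Zfull_contr; apply: Zfull_sum => i _.
    exact: Zfull_dpmul.
  have b0 : b = 0.
    apply: Zfree_full0 => //.
    have -> : b = incl s (h t) - a by rewrite Ex addrC addKr.
    by apply: ZfreeD; [exact: Zfree_incl | exact: ZfreeN].
  by rewrite Ex b0 addr0.
move=> Hh x [a [b [Ha Hb ->]]].
case/RspanP: Hh => psi Epsi.
move: Ha; rewrite /= Hg => /RspanP [phi ->].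
case: Hb => v Hv ->.
have Hv' : contr v (incl s (h t)) = 0.
  rewrite Epsi contr_sum big1 // => i _.
  by rewrite contrM mulrC -contrM (Hv _ (mem_nth 0 (ltn_ord i))) contr0g.
have Ephi : contr (phi (size gs)) (incl s (h t)) =
    \sum_(i < size gs) contr (phi (size gs) * psi i) (nth 0 gs i).
  by rewrite {1}Epsi contr_sum; apply: eq_bigr => i _; rewrite contrM.
rewrite tailsum_split contrD contr_dpmul0 // add0r.
exists (\sum_(i < size gs) contr (phi i + phi (size gs) * psi i) (nth 0 gs i)).
exists (contr v (tailsum h t.+1)); split.
- by apply/RspanP; exists (fun i => phi i + phi (size gs) * psi i).
- exists v; last reflexivity.
  rewrite Hg => g; rewrite mem_rcons in_cons.
  by case/orP => [/eqP ->|]; [exact: Hv' | exact: Hv].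
congr (_ + _).
rewrite size_rcons big_ord_recr nth_rcons ltnn eqxx Ephi.
rewrite (eq_bigr (fun i : 'I_(size gs) => contr (phi i) gs`_i)); last first.
  by move=> i _; rewrite nth_rcons (ltn_ord i).
under [RHS]eq_bigr => i _ do rewrite contrDl.
rewrite big_split.
exact: erefl.
Qed.
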